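(* Let $q=2$, $m\geq2$ and $1\leq r\leq 2m-1$. If $r\geq m$, then $\mathcal C_r$ contains a function $\phi(F)$ with $F$ a monomial of class $(0,0,2m-r,r-m)$. If $r\leq m$, then $\mathcal C_r$ contains a function $\phi(F)$ with $F$ a monomial of class $(0,m-r,r,0)$.
   Context: $k=\mathbf F_2$. $V$ is a $2m$-dimensional $k$-space with nondegenerate alternating form $b$ and symplectic basis $e_1,\dots,e_m,f_m,\dots,f_1$ ($b(e_i,f_j)=\delta_{ij}$, $b(e_i,e_j)=b(f_i,f_j)=0$) with coordinate functions $x_1,\dots,x_m,y_m,\dots,y_1$; $\operatorname{Sp}(V)$ acts on functions by linear substitution. $\mathcal P$ is the set of $1$-dimensional subspaces and $k[\mathcal P]$ the space of functions $\mathcal P\to k$ (functions on $V\setminus\{0\}$). A subspace is totally isotropic if $b$ vanishes on it; $\mathcal I_r$ is the set of $r$-dimensional subspaces that are totally isotropic or are $W^\perp$ for $W$ totally isotropic. $\mathcal C_r$ is the $k\operatorname{Sp}(V)$-submodule of $k[\mathcal P]$ generated by the characteristic function of an element of $\mathcal I_r$. In $k[X_1,\dots,X_m,Y_1,\dots,Y_m]$ put $W_i=X_iY_i$, $Z_i\in\{X_i,Y_i\}$; a monomial $F=\prod_{i\in S}W_i\prod_{i\in T}Z_i$ with $S,T$ disjoint subsets of $\{1,\dots,m\}$ is of class $(0,|S|,|T|,m-|S|-|T|)$. $\phi$ is evaluation $X_i\mapsto x_i,Y_i\mapsto y_i$. *)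

(* Defs.v *)
From HB Require Import structures.
From mathcomp Require Import all_boot all_order all_algebra all_fingroup all_field.
Set Implicit Arguments. Unset Strict Implicit. Unset Printing Implicit Defensive.
Import GRing.Theory.
Local Open Scope ring_scope.

(* k = F_2.  V = F_2^(2m) as row vectors of length m+m: the first block holds
   the coordinates x_1..x_m (w.r.t. e_1..e_m), the second block the
   coordinates y_1..y_m (w.r.t. f_1..f_m). *)
Definition V (m : nat) := 'rV['F_2]_(m + m).

Definition xc (m : nat) (i : 'I_m) (v : V m) : 'F_2 := v 0 (lshift m i).
Definition yc (m : nat) (i : 'I_m) (v : V m) : 'F_2 := v 0 (rshift m i).

Definition bform (m : nat) (u v : V m) : 'F_2 :=
  \sum_(i < m) (xc i u * yc i v - yc i u * xc i v).

(* Sp(V): invertible linear maps (acting on row vectors v |-> v *m g)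
   preserving b. *)
Definition is_Sp (m : nat) (g : 'M['F_2]_(m + m)) : Prop :=
  g \in unitmx /\ forall u v : V m, bform (u *m g) (v *m g) = bform u v.

(* Subspaces of V are represented by (row spaces of) square matrices. *)
Definition totally_isotropic (m : nat) (W : 'M['F_2]_(m + m)) : Prop :=
  forall u v : V m, (u <= W)%MS -> (v <= W)%MS -> bform u v = 0.

Definition is_perp_of (m : nat) (U W : 'M['F_2]_(m + m)) : Prop :=
  forall v : V m, (v <= U)%MS <-> (forall w : V m, (w <= W)%MS -> bform v w = 0).

Definition in_I (m r : nat) (U : 'M['F_2]_(m + m)) : Prop :=
  \rank U = r /\
  (totally_isotropic U \/
   exists W : 'M['F_2]_(m + m), totally_isotropic W /\ is_perp_of U W).

(* P: one-dimensional subspaces of V, i.e. (since k = F_2) nonzero vectors. *)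
Definition P (m : nat) := {v : V m | v != 0}.

(* Action of g on points (for invertible g, v *m g is nonzero). *)
Definition actP (m : nat) (g : 'M['F_2]_(m + m)) (p : P m) : P m :=
  insubd p (val p *m g).

Inductive gen_submod (m : nat) (f0 : P m -> 'F_2) : (P m -> 'F_2) -> Prop :=
  | gs_gen : gen_submod f0 f0
  | gs_zero : gen_submod f0 (fun _ => 0)
  | gs_add f h : gen_submod f0 f -> gen_submod f0 h ->
      gen_submod f0 (fun p => f p + h p)
  | gs_scale (c : 'F_2) f : gen_submod f0 f -> gen_submod f0 (fun p => c * f p)
  | gs_act g f : is_Sp g -> gen_submod f0 f -> gen_submod f0 (fun p => f (actP g p)).

Definition charfun (m : nat) (U : 'M['F_2]_(m + m)) : P m -> 'F_2 :=
  fun p => if (val p <= U)%MS then 1 else 0.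

Definition C (m : nat) (U : 'M['F_2]_(m + m)) : (P m -> 'F_2) -> Prop :=
  gen_submod (charfun U).

(* phi(F) for the monomial F = prod_{i in S} X_i Y_i * prod_{i in T} Z_i,
   where Z_i = X_i if z i, and Z_i = Y_i otherwise. *)
Definition phi_mon (m : nat) (S T : {set 'I_m}) (z : 'I_m -> bool) : P m -> 'F_2 :=
  fun p => (\prod_(i in S) (xc i (val p) * yc i (val p))) *
           \prod_(i in T) (if z i then xc i (val p) else yc i (val p)).

(* C_r contains phi(F) for some monomial F of class (0, s, t, m - s - t). *)
Definition contains_class (m : nat) (U : 'M['F_2]_(m + m)) (s t : nat) : Prop :=
  exists (S T : {set 'I_m}) (z : 'I_m -> bool),
    [disjoint S & T] /\ #|S| = s /\ #|T| = t /\ C U (phi_mon S T z).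

(* Main.v *)
Require Import Defs.
From HB Require Import structures.
From mathcomp Require Import all_boot all_order all_algebra all_fingroup all_field.
From Stdlib Require Import FunctionalExtensionality.
Set Implicit Arguments. Unset Strict Implicit. Unset Printing Implicit Defensive.
Import GRing.Theory.
Local Open Scope ring_scope.

Lemma F2_cases (x : 'F_2) : x = 0 \/ x = 1.
Proof. case: x => [[|[|n]] Hn]; [left|right|]; by [apply/val_inj|]. Qed.
Lemma F2opp (x : 'F_2) : - x = x.
Proof. by case: (F2_cases x) => ->; [rewrite oppr0 | apply/val_inj]. Qed.
Lemma F2add (x : 'F_2) : x + x = 0.
Proof. by case: (F2_cases x) => ->; apply/val_inj. Qed.
Lemma F2neq0 (x : 'F_2) : x != 0 -> x = 1.
Proof. by case: (F2_cases x) => ->. Qed.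

Section S.
Variable m : nat.
Local Notation V := (V m).

Definition Jm : 'M['F_2]_(m+m) := block_mx 0 1%:M 1%:M 0.

Lemma Jll (i j : 'I_m) : Jm (lshift m i) (lshift m j) = 0.
Proof. by rewrite /Jm block_mxEul mxE. Qed.
Lemma Jlr (i j : 'I_m) : Jm (lshift m i) (rshift m j) = (i == j)%:R.
Proof. by rewrite /Jm block_mxEur mxE. Qed.
Lemma Jrl (i j : 'I_m) : Jm (rshift m i) (lshift m j) = (i == j)%:R.
Proof. by rewrite /Jm block_mxEdl mxE. Qed.
Lemma Jrr (i j : 'I_m) : Jm (rshift m i) (rshift m j) = 0.
Proof. by rewrite /Jm block_mxEdr mxE. Qed.

Lemma uJl (u : V) (i : 'I_m) : (u *m Jm) 0 (lshift m i) = yc i u.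
Proof.
rewrite mxE big_split_ord /= big1 ?add0r => [|k _]; last by rewrite Jll mulr0.
rewrite (bigD1 i) //= big1 ?addr0 => [|k /negbTE nk]; last by rewrite Jrl nk mulr0.
by rewrite Jrl eqxx mulr1.
Qed.
Lemma uJr (u : V) (i : 'I_m) : (u *m Jm) 0 (rshift m i) = xc i u.
Proof.
rewrite mxE big_split_ord /= [X in _ + X]big1 ?addr0 => [|k _]; last by rewrite Jrr mulr0.
rewrite (bigD1 i) //= big1 ?addr0 => [|k /negbTE nk]; last by rewrite Jlr nk mulr0.
by rewrite Jlr eqxx mulr1.
Qed.

Lemma bformE (u v : V) : bform u v = (u *m Jm *m v^T) 0 0.
Proof.
rewrite !mxE big_split_ord /= /bform -big_split /=.
apply: eq_bigr => i _.
rewrite uJl uJr !mxE /xc /yc F2opp addrC; congr (_ + _); exact: mulrC.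
Qed.

Lemma bform_alt (u : V) : bform u u = 0.
Proof. by rewrite /bform big1 // => i _; rewrite mulrC subrr. Qed.

Lemma bform_sym (u v : V) : bform u v = bform v u.
Proof.
rewrite /bform; apply: eq_bigr => i _.
by rewrite -[RHS]F2opp opprB [xc i v * _]mulrC [yc i v * _]mulrC.
Qed.

Lemma bformDl (u w v : V) : bform (u + w) v = bform u v + bform w v.
Proof. by rewrite !bformE !mulmxDl !mxE. Qed.
Lemma bformZl (a : 'F_2) (u v : V) : bform (a *: u) v = a * bform u v.
Proof. by rewrite !bformE -!scalemxAl !mxE. Qed.
Lemma bformDr (u w v : V) : bform v (u + w) = bform v u + bform v w.
Proof. by rewrite !(bform_sym v) bformDl. Qed.
Lemma bformZr (a : 'F_2) (u v : V) : bform v (a *: u) = a * bform v u.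
Proof. by rewrite !(bform_sym v) bformZl. Qed.
Lemma bform0l (v : V) : bform 0 v = 0.
Proof. by have := bformZl 0 0 v; rewrite scale0r mul0r. Qed.
Lemma bform0r (v : V) : bform v 0 = 0.
Proof. by rewrite bform_sym bform0l. Qed.

Lemma bform_sumr (I : Type) (r : seq I) (P : pred I) (c : I -> 'F_2) (w : I -> V) (v : V) :
  bform v (\sum_(i <- r | P i) c i *: w i) = \sum_(i <- r | P i) c i * bform v (w i).
Proof.
elim/big_rec2: _ => [|i y1 y2 Pi <-]; first by rewrite bform0r.
by rewrite bformDr bformZr.
Qed.

Definition fvec (n : nat) : V := \row_(c < m + m) ((c : nat) == m + n)%:R.
Definition evec (j : 'I_m) : V := \row_(c < m + m) (c == lshift m j)%:R.

Lemma xc_fvec (i : 'I_m) n : xc i (fvec n) = 0.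
Proof.
rewrite /xc mxE /=; case: eqP => // h; have := ltn_ord i; rewrite h.
by rewrite ltnNge leq_addr.
Qed.
Lemma yc_fvec (i : 'I_m) n : yc i (fvec n) = ((i : nat) == n)%:R.
Proof. by rewrite /yc mxE /= eqn_add2l. Qed.
Lemma xc_evec (i j : 'I_m) : xc i (evec j) = (i == j)%:R.
Proof.
by rewrite /xc mxE (inj_eq (@lshift_inj m m)).
Qed.
Lemma yc_evec (i j : 'I_m) : yc i (evec j) = 0.
Proof.
rewrite /yc mxE; case: eqP => // /(congr1 val) /= h.
by have := ltn_ord j; rewrite -h ltnNge leq_addr.
Qed.

Lemma bform_fvec (v : V) (j : 'I_m) : bform v (fvec j) = xc j v.
Proof.
rewrite /bform (bigD1 j) //= big1 => [|k /negbTE nk].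
  by rewrite xc_fvec yc_fvec eqxx mulr1 mulr0 subr0 addr0.
have nk' : ((k : nat) == j) = false by exact: nk.
by rewrite xc_fvec yc_fvec nk' mulr0 mulr0 subr0.
Qed.
Lemma bform_evec (v : V) (j : 'I_m) : bform v (evec j) = yc j v.
Proof.
rewrite /bform (bigD1 j) //= big1 => [|k /negbTE nk].
  by rewrite xc_evec yc_evec eqxx mulr1 mulr0 sub0r F2opp addr0.
by rewrite xc_evec yc_evec nk mulr0 mulr0 subr0.
Qed.

Definition tv (u : V) : 'M['F_2]_(m + m) := 1%:M + (Jm *m u^T) *m u.

Lemma tvE (v u : V) : v *m tv u = v + bform v u *: u.
Proof.
rewrite /tv mulmxDr mulmx1 !mulmxA; congr (_ + _).
by rewrite [v *m Jm *m u^T]mx11_scalar -bformE mul_scalar_mx.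
Qed.

Lemma tv_inv (u : V) : tv u *m tv u = 1%:M.
Proof.
apply/row_matrixP => i; rewrite !rowE mulmx1 mulmxA !tvE bformDl bformZl bform_alt.
by rewrite mulr0 addr0 -addrA -scalerDl F2add scale0r addr0.
Qed.

Definition Sp (g : 'M['F_2]_(m + m)) := is_Sp g.

Lemma Sp_tv (u : V) : is_Sp (tv u).
Proof.
split; first by case: (mulmx1_unit (tv_inv u)).
move=> v w; rewrite !tvE bformDl !bformDr !bformZl !bformZr bform_alt !mulr0 addr0.
by rewrite [bform u w]bform_sym mulrC -addrA F2add addr0.
Qed.

Lemma Sp1 : @is_Sp m 1%:M.
Proof. by split; [exact: unitmx1 | move=> u v; rewrite !mulmx1]. Qed.

Lemma Sp_mul (g1 g2 : 'M['F_2]_(m + m)) : is_Sp g1 -> is_Sp g2 -> is_Sp (g1 *m g2).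
Proof.
move=> [u1 h1] [u2 h2]; split; first by rewrite unitmx_mul u1 u2.
by move=> u v; rewrite !mulmxA h2 h1.
Qed.

Lemma Sp_inv (g : 'M['F_2]_(m + m)) : is_Sp g -> is_Sp (invmx g).
Proof.
move=> [u1 h1]; split; first by rewrite unitmx_inv.
by move=> u v; rewrite -h1 !mulmxKV.
Qed.

Lemma actP_val (g : 'M['F_2]_(m + m)) (p : P m) : g \in unitmx -> val (actP g p) = val p *m g.
Proof.
move=> ug; rewrite /actP insubdK //; apply/negP => /eqP h.
have := valP p; rewrite -(mulmxK ug (val p)) h mul0mx; by rewrite eqxx.
Qed.

Lemma xc_sum (I : Type) (r : seq I) (Pr : pred I) (c : I -> 'F_2) (w : I -> V) (i : 'I_m) :
  xc i (\sum_(j <- r | Pr j) c j *: w j) = \sum_(j <- r | Pr j) c j * xc i (w j).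
Proof. by rewrite /xc summxE; apply: eq_bigr => j _; rewrite mxE. Qed.
Lemma yc_sum (I : Type) (r : seq I) (Pr : pred I) (c : I -> 'F_2) (w : I -> V) (i : 'I_m) :
  yc i (\sum_(j <- r | Pr j) c j *: w j) = \sum_(j <- r | Pr j) c j * yc i (w j).
Proof. by rewrite /yc summxE; apply: eq_bigr => j _; rewrite mxE. Qed.

Definition Lstd (k : nat) (v : V) : bool :=
  [forall i : 'I_m, xc i v == 0] && [forall i : 'I_m, (k <= i)%N ==> (yc i v == 0)].
Definition Pstd (k : nat) (v : V) : bool :=
  [forall i : 'I_m, (i < k)%N ==> (xc i v == 0)].

Lemma dec_L (k : nat) (v : V) : Lstd k v ->
  v = \sum_(j < m | (j < k)%N) yc j v *: fvec j.
Proof.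
case/andP => /forallP hx /forallP hy.
apply/rowP => c; rewrite summxE.
case: (split_ordP c) => j ->.
  rewrite big1 => [|j' _]; first by apply/eqP; exact: hx.
  by rewrite mxE; have := xc_fvec j j'; rewrite /xc => ->; rewrite mulr0.
have E j' : (yc j' v *: fvec j') 0 (rshift m j) = yc j' v * (j' == j)%:R.
  by rewrite mxE; have := yc_fvec j j'; rewrite /yc => ->; rewrite eq_sym.
rewrite (eq_bigr _ (fun j' _ => E j')).
case: (ltnP j k) => hjk.
  rewrite (bigD1 j) //= eqxx mulr1 big1 ?addr0 // => j' /andP [_ nj].
  by rewrite (negbTE nj) mulr0.
rewrite big1 => [|j' hj']; first by apply/eqP; have := hy j; rewrite hjk.
have -> : (j' == j) = false by apply/negP => /eqP e; move: hj'; rewrite e ltnNge hjk.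
by rewrite mulr0.
Qed.

Lemma xcD (i : 'I_m) (u v : V) : xc i (u + v) = xc i u + xc i v.
Proof. by rewrite /xc mxE. Qed.
Lemma ycD (i : 'I_m) (u v : V) : yc i (u + v) = yc i u + yc i v.
Proof. by rewrite /yc mxE. Qed.

Lemma vadd2 (v : V) : v + v = 0.
Proof. by rewrite -[v]scale1r -scalerDl F2add scale0r. Qed.

Lemma bform_ff (i j : 'I_m) : bform (fvec i) (fvec j) = 0.
Proof. by rewrite bform_fvec xc_fvec. Qed.

Lemma witt (W : 'M['F_2]_(m + m)) : totally_isotropic W ->
  exists h, is_Sp h /\ (\rank W <= m)%N /\
    forall v : V, (v *m h <= W)%MS = Lstd (\rank W) v.
Proof.
move=> tiW.
set B := row_base W; set k0 := \rank W.
have BW (i : 'I_k0) : (row i B <= W)%MS.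
  by apply: submx_trans (row_sub i B) _; rewrite eq_row_base.
have claim : forall k, (k <= k0)%N -> exists h, is_Sp h /\ (k <= m)%N /\
    forall i : 'I_k0, (i < k)%N -> row i B = fvec i *m h.
  elim => [|k IH] hk.
    by exists 1%:M; split; [exact: Sp1 | split].
  have [h0 [Sh0 [km Hrow]]] := IH (ltnW hk).
  have uh0 := Sh0.1.
  pose i0 : 'I_k0 := Ordinal hk.
  pose w' := row i0 B *m invmx h0.
  have fvinv (i : 'I_k0) : (i < k)%N -> fvec i = row i B *m invmx h0.
    by move=> hi; rewrite Hrow // mulmxK.
  have orth (j : 'I_m) : (j < k)%N -> xc j w' = 0.
    move=> hj; rewrite -bform_fvec.
    have := fvinv (Ordinal (ltn_trans hj hk)) hj => /= ->.
    rewrite (Sp_inv Sh0).2; apply: tiW; exact: BW.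
  have nonL : ~~ Lstd k w'.
    apply/negP => hL; have D := dec_L hL.
    pose c : 'rV['F_2]_k0 := 'e_i0 - \sum_(j < m | (j < k)%N) yc j w' *: 'e_(insubd i0 j).
    have cB : c *m B = 0.
      rewrite mulmxBl mulmx_suml -rowE.
      have -> : \sum_(j < m | (j < k)%N) yc j w' *: 'e_(insubd i0 j) *m B =
                \sum_(j < m | (j < k)%N) yc j w' *: fvec j *m h0.
        apply: eq_bigr => j hj; rewrite -scalemxAl -rowE Hrow; last first.
          by rewrite val_insubd (ltn_trans hj hk).
        by rewrite val_insubd (ltn_trans hj hk) scalemxAl.
      by rewrite -mulmx_suml -D mulmxKV // subrr.
    have c0 : c = 0 by apply: (row_free_inj (row_base_free W)); rewrite cB mul0mx.
    have := congr1 (fun M : 'rV_k0 => M 0 i0) c0.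
    rewrite /c !mxE summxE big1 ?eqxx ?subr0 => [|j hj]; first by move/eqP; rewrite oner_eq0.
    rewrite !mxE; have -> : (i0 == insubd i0 j) = false.
      apply/negP => /eqP /(congr1 val); rewrite val_insubd (ltn_trans hj hk) /= => e.
      by move: hj; rewrite -e ltnn.
    by rewrite andbF mulr0.
  have [j [kj hj]] : exists j : 'I_m, (k <= j)%N /\ (xc j w' != 0 \/ yc j w' != 0).
    move: nonL; rewrite /Lstd negb_and => /orP [/forallPn [j hj] | /forallPn [j]].
      exists j; split; last by left.
      by rewrite leqNgt; apply/negP => h; move: hj; rewrite orth ?eqxx.
    by rewrite negb_imply => /andP [kj hj]; exists j; split => //; right.
  have km' : (k < m)%N by apply: leq_trans (ltn_ord j).
  pose kk : 'I_m := Ordinal km'.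
  have [z [z1 [z2 z3]]] : exists z : V, bform w' z = 1 /\ xc kk z = 1 /\
      forall j : 'I_m, (j < k)%N -> xc j z = 0.
    case: (F2_cases (yc kk w')) => ykk; last first.
      exists (evec kk); rewrite bform_evec ykk xc_evec eqxx; do 2!split => //.
      move=> j' hj'; rewrite xc_evec; case: eqP => // e; move: hj'; by rewrite e ltnn.
    have [xj | ] := boolP [exists j', xc j' w' != 0].
      case/existsP: xj => j' /F2neq0 xj.
      exists (evec kk + fvec j'); rewrite bformDr bform_evec bform_fvec ykk xj add0r.
      split => //; rewrite xcD.
      rewrite xc_evec xc_fvec eqxx addr0; split => // j'' hj''.
      rewrite xcD xc_evec xc_fvec addr0.
      case: eqP => // e; move: hj''; by rewrite e ltnn.
    move/existsPn => xz.
    case: hj => [hx | /F2neq0 yj]; first by move: hx; rewrite (eqP (negbNE (xz j))) eqxx.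
    have jk : j != kk by apply/negP => /eqP e; move: yj; rewrite e ykk => /eqP; rewrite eq_sym oner_eq0.
    exists (evec kk + evec j); rewrite bformDr !bform_evec ykk yj add0r.
    split => //; rewrite xcD.
    rewrite !xc_evec eqxx eq_sym (negbTE jk) addr0; split => // j'' hj''.
    rewrite xcD !xc_evec.
    have -> : (j'' == kk) = false by apply/negP => /eqP e; move: hj''; rewrite e ltnn.
    have -> : (j'' == j) = false by apply/negP => /eqP e; move: hj''; rewrite e ltnNge kj.
    by rewrite addr0.
  pose g := tv (fvec kk + z) *m tv (z + w').
  have Sg : is_Sp g by apply: Sp_mul; apply: Sp_tv.
  exists (g *m h0); split; first exact: Sp_mul.
  split => // i hi.
  have gf : forall j : nat, (j < k)%N -> fvec j *m g = fvec j.
    move=> j0 hj'; have jm : (j0 < m)%N by apply: ltn_trans hj' km'.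
    pose j' : 'I_m := Ordinal jm; change (fvec j' *m g = fvec j').
    rewrite /g mulmxA (tvE (fvec j')) bformDr bform_ff.
    rewrite [bform (fvec j') z]bform_sym bform_fvec z3 // add0r scale0r addr0.
    rewrite tvE bformDr [bform (fvec j') z]bform_sym bform_fvec z3 // add0r.
    by rewrite [bform (fvec j') w']bform_sym bform_fvec orth // scale0r addr0.
  case: (ltnP i k) => hik.
    by rewrite Hrow // mulmxA gf.
  have ei : i = i0 by apply: val_inj => /=; apply/eqP; rewrite eqn_leq hik -ltnS hi.
  rewrite ei mulmxA.
  have -> : fvec i0 = fvec kk by [].
  rewrite /g mulmxA (tvE (fvec kk)) bformDr bform_ff add0r.
  rewrite [bform (fvec kk) z]bform_sym bform_fvec z2 scale1r addrA vadd2 add0r.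
  rewrite tvE bformDr bform_alt add0r [bform z w']bform_sym z1 scale1r addrA vadd2 add0r.
  by rewrite mulmxKV.
have [h [Sh [k0m Hrow]]] := claim k0 (leqnn k0).
exists h; split => //; split => // v.
apply/idP/idP.
  rewrite -(eq_row_base W) -/B => /submxP [D vhD]; rewrite [D *m B]mulmx_sum_row in vhD.
  have E : \sum_i D 0 i *: row i B = (\sum_(i < k0) D 0 i *: fvec i) *m h.
    rewrite mulmx_suml; apply: eq_bigr => i _; by rewrite Hrow // scalemxAl.
  move: vhD; rewrite E.
  move/(congr1 (fun M => M *m invmx h)); rewrite !mulmxK ?Sh.1 // => ->.
  apply/andP; split; apply/forallP => i.
    by rewrite xc_sum big1 // => j _; rewrite xc_fvec mulr0.
  apply/implyP => ki; rewrite yc_sum big1 // => j _; rewrite yc_fvec.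
  have -> : ((i : nat) == j) = false.
    by apply/negP => /eqP e; move: (ltn_ord j); rewrite -e ltnNge ki.
  by rewrite mulr0.
move/dec_L => ->; rewrite mulmx_suml; apply: summx_sub => j hj.
rewrite -scalemxAl; apply: scalemx_sub.
have -> : fvec j *m h = row (Ordinal hj) B by rewrite Hrow.
exact: BW.
Qed.

Lemma Jm_unit : Jm \in unitmx.
Proof.
have : Jm *m Jm = 1%:M.
  rewrite /Jm mulmx_block !mul0mx !mulmx0 !mul1mx !add0r !addr0.
  by rewrite [RHS]scalar_mx_block.
by case/mulmx1_unit.
Qed.

Lemma vJWE (v : V) (W : 'M['F_2]_(m + m)) (i : 'I_(m + m)) :
  (v *m Jm *m W^T) 0 i = bform v (row i W).
Proof. by rewrite bformE !mxE; apply: eq_bigr => c _; rewrite !mxE. Qed.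

Lemma perp_rank (U W : 'M['F_2]_(m + m)) : is_perp_of U W ->
  \rank U = (m + m - \rank W)%N.
Proof.
move=> hp.
have key (v : V) : (v <= U)%MS = (v <= kermx (Jm *m W^T))%MS.
  rewrite sub_kermx mulmxA; apply/idP/idP.
    move/(hp v) => h; apply/eqP/rowP => i; rewrite vJWE mxE; apply: h; exact: row_sub.
  move/eqP => h; apply/(hp v) => w /submxP [D ->].
  rewrite mulmx_sum_row bform_sumr big1 // => i _.
  by rewrite -vJWE h mxE mulr0.
have eqK : (U == kermx (Jm *m W^T))%MS.
  apply/andP; split; apply/row_subP => i; by [rewrite -key row_sub | rewrite key row_sub].
rewrite (eqmx_rank eqK) mxrank_ker -mxrank_tr trmx_mul trmxK mxrankMfree ?mxrank_tr //.
by rewrite row_free_unit unitmx_tr Jm_unit.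
Qed.

Lemma card_lt (k : nat) : (k <= m)%N -> #|[set j : 'I_m | (j < k)%N]| = k.
Proof.
move=> hk.
have -> : [set j : 'I_m | (j < k)%N] = widen_ord hk @: [set: 'I_k].
  apply/setP => j; rewrite inE; apply/idP/imsetP => [hj | [i _ ->]] //=.
  by exists (Ordinal hj); [rewrite inE | apply: ord_inj].
by rewrite card_imset ?cardsT ?card_ord //; by move=> x y /(congr1 val) /= e; apply: ord_inj.
Qed.

Lemma card_ge (k : nat) : (k <= m)%N -> #|[set j : 'I_m | (k <= j)%N]| = (m - k)%N.
Proof.
move=> hk.
have -> : [set j : 'I_m | (k <= j)%N] = ~: [set j : 'I_m | (j < k)%N].
  by apply/setP => j; rewrite !inE -leqNgt.
have e := cardsC [set j : 'I_m | (j < k)%N]; rewrite card_lt // card_ord in e.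
by apply/eqP; rewrite -(eqn_add2l k) subnKC // e.
Qed.

Lemma prod_F2 (A : {set 'I_m}) (F : 'I_m -> 'F_2) :
  \prod_(i in A) F i = if [forall i in A, F i == 1] then 1 else 0.
Proof.
case: ifP => [/forall_inP h | /negbT /forall_inPn [i hi hF]].
  by apply: big1 => i /h /eqP.
rewrite (bigD1 i) //=; case: (F2_cases (F i)) hF => -> //; by rewrite mul0r.
Qed.

Lemma C_ext (U : 'M['F_2]_(m + m)) (f g : P m -> 'F_2) :
  C U f -> (forall p, f p = g p) -> C U g.
Proof. by move=> hf e; have <- : f = g by apply: functional_extensionality. Qed.

Lemma target (U : 'M['F_2]_(m + m)) (Q : V -> bool) (h : 'M['F_2]_(m + m)) :
  is_Sp h -> (forall v, (v *m h <= U)%MS = Q v) ->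
  (forall x y, Q x -> Q y -> Q (x + y)) ->
  forall a f, Q f -> (forall v, Q v -> bform v f = 0) -> bform a f = 1 ->
  C U (fun p => if Q (val p + a) then 1 else 0).
Proof.
move=> Sh hQ Qadd a f Qf Qo af.
have C0 : C U (fun p => if Q (val p) then 1 else 0).
  apply: (C_ext (gs_act Sh (gs_gen (charfun U)))) => p.
  by rewrite /charfun actP_val ?Sh.1 // hQ.
have Ct (u : V) : C U (fun p => if Q (val p *m tv u) then 1 else 0).
  apply: (C_ext (gs_act (Sp_tv u) C0)) => p.
  by rewrite actP_val // (Sp_tv u).1.
apply: (C_ext (gs_add (Ct (a + f)) (Ct a))) => p.
set v := val p.
have Qiff x : Q (x + f) = Q x.
  apply/idP/idP => [hx | hx]; last exact: Qadd.
  by have := Qadd _ _ hx Qf; rewrite -addrA vadd2 addr0.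
have Qvab : Q (v + a) -> bform v f = 1.
  move/Qo; rewrite bformDl af => e.
  by case: (F2_cases (bform v f)) e => -> //; rewrite add0r => /eqP; rewrite oner_eq0.
have Qvb : Q v -> bform v f = 0 by apply: Qo.
rewrite !tvE bformDr.
have Qaf : Q (v + (a + f)) = Q (v + a) by rewrite addrA Qiff.
have one0 : (1 : 'F_2) != 0 by rewrite oner_eq0.
case: (F2_cases (bform v a)) => ba; case: (F2_cases (bform v f)) => bf; rewrite ba bf.
- have nQ : Q (v + a) = false.
    by apply/negP => /Qvab; rewrite bf => e; move: one0; rewrite -e eqxx.
  by rewrite add0r !scale0r !addr0 nQ F2add.
- have nQ : Q v = false.
    by apply/negP => /Qvb; rewrite bf => e; move: one0; rewrite e eqxx.
  by rewrite add0r scale1r Qaf scale0r addr0 nQ addr0.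
- have nQ : Q (v + a) = false.
    by apply/negP => /Qvab; rewrite bf => e; move: one0; rewrite -e eqxx.
  by rewrite addr0 !scale1r Qaf nQ addr0.
- have nQ : Q v = false.
    by apply/negP => /Qvb; rewrite bf => e; move: one0; rewrite e eqxx.
  by rewrite F2add scale0r scale1r addr0 nQ add0r.
Qed.

Lemma LstdPstd (v : V) : Lstd m v = Pstd m v.
Proof.
apply/idP/idP => [/andP [/forallP hx _] | /forallP hx].
  by apply/forallP => i; rewrite (hx i) implybT.
apply/andP; split; apply/forallP => i; last by rewrite leqNgt ltn_ord.
by move: (hx i); rewrite ltn_ord.
Qed.

Lemma Lstd_fvec (k : nat) (i : 'I_m) : (i < k)%N -> Lstd k (fvec i).
Proof.
move=> ik; apply/andP; split; apply/forallP => j; first by rewrite xc_fvec.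
apply/implyP => kj; rewrite yc_fvec.
have -> : ((j : nat) == i) = false.
  by apply/negP => /eqP e; move: ik; rewrite -e ltnNge kj.
by [].
Qed.

Lemma perp_std (U W h : 'M['F_2]_(m + m)) (k0 : nat) : is_Sp h -> is_perp_of U W ->
  (forall v : V, (v *m h <= W)%MS = Lstd k0 v) ->
  forall v : V, (v *m h <= U)%MS = Pstd k0 v.
Proof.
move=> Sh hp hW v; apply/idP/idP.
  move/hp => H; apply/forallP => i; apply/implyP => ik.
  rewrite -bform_fvec -(Sh.2 v (fvec i)); apply/eqP; apply: H.
  by rewrite hW Lstd_fvec.
move/forallP => hx; apply/hp => w hw.
have : Lstd k0 (w *m invmx h) by rewrite -hW mulmxKV ?Sh.1.
move/dec_L => D.
rewrite -(mulmxKV Sh.1 w) Sh.2 D bform_sumr big1 // => j hj.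
by rewrite bform_fvec (eqP (implyP (hx j) hj)) mulr0.
Qed.

Lemma reduce (r : nat) (U : 'M['F_2]_(m + m)) : in_I r U ->
  ((m <= r)%N -> exists h, is_Sp h /\ forall v : V, (v *m h <= U)%MS = Pstd (m + m - r) v) /\
  ((r <= m)%N -> exists h, is_Sp h /\ forall v : V, (v *m h <= U)%MS = Lstd r v).
Proof.
case => rk [ti | [W [tiW hp]]].
  have [h [Sh [rm hh]]] := witt ti; rewrite rk in rm hh.
  split => hr; exists h; split => // v.
  have e : r = m by apply/eqP; rewrite eqn_leq rm hr.
  by rewrite hh e addnK LstdPstd.
have [h [Sh [km hh]]] := witt tiW.
have rU := perp_rank hp; rewrite rk in rU.
have hP := perp_std Sh hp hh.
have k2 : (\rank W <= m + m)%N by apply: leq_trans km (leq_addr m m).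
split => hr; exists h; split => // v.
  by rewrite hP rU subKn.
have : (m + m - \rank W <= m)%N by rewrite -rU.
rewrite leq_subLR leq_add2r => mk.
have e : \rank W = m by apply/eqP; rewrite eqn_leq km mk.
by rewrite hP e -LstdPstd -e rU e addnK.
Qed.

Lemma mulF2 (x y : 'F_2) : (x * y == 1) = (x == 1) && (y == 1).
Proof. by case: (F2_cases x) => ->; case: (F2_cases y) => ->; rewrite ?mul0r ?mul1r ?eqxx ?andbF //= eq_sym oner_eq0. Qed.
Lemma addF2_1 (x : 'F_2) : (x + 1 == 0) = (x == 1).
Proof. by case: (F2_cases x) => ->; rewrite ?add0r ?F2add ?eqxx // oner_eq0 eq_sym oner_eq0. Qed.

Lemma sum_delta (Pr : pred 'I_m) (i : 'I_m) :
  \sum_(j < m | Pr j) (1 : 'F_2) * (i == j)%:R = (Pr i)%:R.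
Proof.
case: (boolP (Pr i)) => hi.
  rewrite (bigD1 i) //= eqxx mul1r big1 ?addr0 // => j /andP [_ nj].
  by rewrite eq_sym (negbTE nj) mulr0.
by apply: big1 => j hj; case: eqP => [e|_]; [move: hi; rewrite e hj | rewrite mulr0].
Qed.

Lemma inst_P (k : nat) (U h : 'M['F_2]_(m + m)) : (0 < k)%N -> (k <= m)%N -> is_Sp h ->
  (forall v : V, (v *m h <= U)%MS = Pstd k v) -> contains_class U 0 k.
Proof.
move=> k0 km Sh hh.
have m0 : (0 < m)%N by apply: leq_trans km.
pose i0 : 'I_m := Ordinal m0.
pose a : V := \sum_(j < m | (j < k)%N) 1 *: evec j.
have xa i : xc i a = (i < k)%:R.
  by rewrite xc_sum (eq_bigr _ (fun j _ => congr1 _ (xc_evec i j))) sum_delta.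
have Qadd x y : Pstd k x -> Pstd k y -> Pstd k (x + y).
  move=> /forallP hx /forallP hy; apply/forallP => i; apply/implyP => ik.
  by rewrite xcD (eqP (implyP (hx i) ik)) (eqP (implyP (hy i) ik)) addr0.
have Qf : Pstd k (fvec i0) by apply/forallP => i; rewrite xc_fvec eqxx implybT.
have Qo v : Pstd k v -> bform v (fvec i0) = 0.
  by move/forallP/(_ i0)/implyP/(_ k0)/eqP; rewrite bform_fvec.
have af : bform a (fvec i0) = 1 by rewrite bform_fvec xa k0.
exists set0, [set j : 'I_m | (j < k)%N], (fun _ => true).
split; first by rewrite disjoints_subset; apply/subsetP => j; rewrite inE.
split; first by rewrite cards0.
split; first exact: card_lt.
apply: (C_ext (target Sh hh Qadd Qf Qo af)) => p.
rewrite /phi_mon big_set0 mul1r prod_F2; congr (if _ then _ else _).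
apply/forallP/forall_inP => H i.
  rewrite inE => ik; move: (implyP (H i) ik); by rewrite xcD xa ik addF2_1.
apply/implyP => ik; rewrite xcD xa ik addF2_1; apply: H; by rewrite inE.
Qed.

Lemma inst_L (r : nat) (U h : 'M['F_2]_(m + m)) : (0 < r)%N -> (r <= m)%N -> is_Sp h ->
  (forall v : V, (v *m h <= U)%MS = Lstd r v) -> contains_class U (m - r) r.
Proof.
move=> r0 rm Sh hh.
have m0 : (0 < m)%N by apply: leq_trans rm.
pose i0 : 'I_m := Ordinal m0.
pose a : V := \sum_(j < m) 1 *: evec j + \sum_(j < m | (r <= j)%N) 1 *: fvec j.
have xa i : xc i a = 1.
  rewrite xcD xc_sum (eq_bigr _ (fun j _ => congr1 _ (xc_evec i j))) sum_delta.
  by rewrite xc_sum big1 ?addr0 // => j _; rewrite xc_fvec mulr0.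
have ya i : yc i a = (r <= i)%:R.
  rewrite ycD yc_sum big1 ?add0r => [|j _]; last by rewrite yc_evec mulr0.
  rewrite yc_sum; rewrite (eq_bigr (fun j => 1 * (i == j)%:R)) ?sum_delta // => j _.
  by rewrite yc_fvec.
have Qadd x y : Lstd r x -> Lstd r y -> Lstd r (x + y).
  move=> /andP [/forallP hx1 /forallP hx2] /andP [/forallP hy1 /forallP hy2].
  apply/andP; split; apply/forallP => i; first by rewrite xcD (eqP (hx1 i)) (eqP (hy1 i)) addr0.
  apply/implyP => ik.
  by rewrite ycD (eqP (implyP (hx2 i) ik)) (eqP (implyP (hy2 i) ik)) addr0.
have Qf : Lstd r (fvec i0) by apply: Lstd_fvec.
have Qo v : Lstd r v -> bform v (fvec i0) = 0.
  by case/andP => /forallP /(_ i0) /eqP; rewrite bform_fvec.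
have af : bform a (fvec i0) = 1 by rewrite bform_fvec xa.
exists [set j : 'I_m | (r <= j)%N], [set j : 'I_m | (j < r)%N], (fun _ => true).
split.
  by rewrite disjoints_subset; apply/subsetP => j; rewrite !inE -leqNgt.
split; first exact: card_ge.
split; first exact: card_lt.
apply: (C_ext (target Sh hh Qadd Qf Qo af)) => p.
rewrite /phi_mon !prod_F2.
set A := [forall _ in _, _]; set B := [forall _ in _, _].
have -> : (if A then 1 else 0) * (if B then 1 else 0) = (if A && B then 1 else 0 : 'F_2).
  by case: A; case: B; rewrite ?mul1r ?mul0r.
congr (if _ then _ else _); rewrite /A /B; symmetry.
apply/idP/idP.
  case/andP => /forall_inP hA /forall_inP hB.
  apply/andP; split; apply/forallP => i.
    rewrite xcD xa addF2_1; case: (ltnP i r) => hi.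
      by apply: hB; rewrite inE.
    by have := hA i; rewrite inE hi mulF2 => /(_ isT) /andP [].
  apply/implyP => ri; rewrite ycD ya ri addF2_1.
  by have := hA i; rewrite inE ri mulF2 => /(_ isT) /andP [].
case/andP => /forallP hX /forallP hY.
apply/andP; split; apply/forall_inP => i; rewrite inE => hi.
  move: (hX i) (implyP (hY i) hi); rewrite xcD ycD xa ya hi !addF2_1 mulF2.
  by move=> -> ->.
by move: (hX i); rewrite xcD xa addF2_1.
Qed.
End S.

Unset Implicit Arguments.

Theorem lemma6p5 (m r : nat) (hm : (2 <= m)%N) (hr1 : (1 <= r)%N)
  (hr2 : (r <= 2 * m - 1)%N) (U : 'M_(m + m)) (hU : @in_I m r U) :
  ((m <= r)%N -> contains_class U 0 (2 * m - r)) /\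
  ((r <= m)%N -> contains_class U (m - r) r).
Proof.
have [R1 R2] := reduce hU.
split => hr.
  have [h [Sh hh]] := R1 hr.
  have e : (2 * m = m + m)%N by rewrite mul2n addnn.
  rewrite e; apply: (inst_P _ _ Sh hh).
    by rewrite subn_gt0; apply: leq_ltn_trans hr2 _; rewrite e subn1 prednK // addn_gt0 (leq_trans _ hm).
  by rewrite leq_subLR leq_add2r.
have [h [Sh hh]] := R2 hr.
exact: (inst_L hr1 hr Sh hh).
Qed.
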